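(* Let $R$ be a commutative ring with $1$ such that every maximal ideal of $R$ is a pure ideal. Then $R$ is absolutely flat, i.e. $R$ is reduced and zero-dimensional (every prime ideal is maximal).
   Context: An ideal $I$ of a commutative ring $R$ is called pure if the canonical ring map $R\to R/I$ is flat. A ring is absolutely flat if every module over it is flat; equivalently it is reduced and zero-dimensional. *)

(* Defs.v *)
From HB Require Import structures.
From mathcomp Require Import all_boot all_order all_algebra.
Set Implicit Arguments. Unset Strict Implicit. Unset Printing Implicit Defensive.
Import GRing.Theory.
Local Open Scope ring_scope.

Section CommAlg.
Variable R : comPzRingType.

Definition is_ideal (I : {pred R}) : Prop :=
  [/\ 0 \in I,
      (forall x y, x \in I -> y \in I -> x + y \in I) &
      (forall a x, x \in I -> a * x \in I)].

Definition is_prime_ideal (I : {pred R}) : Prop :=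
  [/\ is_ideal I, 1 \notin I &
      (forall a b, a * b \in I -> a \in I \/ b \in I)].

Definition is_maximal_ideal (I : {pred R}) : Prop :=
  [/\ is_ideal I, 1 \notin I &
      (forall J : {pred R}, is_ideal J -> {subset I <= J} -> 1 \notin J ->
         {subset J <= I})].

Definition bilinear_map (A M T : lmodType R) (b : A -> M -> T) : Prop :=
  (forall m, linear (fun a => b a m)) /\ (forall a, linear (b a)).

Definition is_tensor (A M T : lmodType R) (b : A -> M -> T) : Prop :=
  bilinear_map b /\
  forall (N : lmodType R) (c : A -> M -> N), bilinear_map c ->
    exists g : T -> N,
      [/\ linear g, (forall a m, g (b a m) = c a m) &
          (forall g' : T -> N, linear g' -> (forall a m, g' (b a m) = c a m) ->
             forall t, g' t = g t)].

Definition flat_module (M : lmodType R) : Prop :=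
  forall (A B : lmodType R) (f : A -> B), linear f -> injective f ->
  forall (TA TB : lmodType R) (bA : A -> M -> TA) (bB : B -> M -> TB),
    is_tensor bA -> is_tensor bB ->
  forall g : TA -> TB, linear g -> (forall a m, g (bA a m) = bB (f a) m) ->
    injective g.

(* I is pure: the canonical map R -> R/I makes R/I a flat R-module.
   R/I is given (up to isomorphism) as an R-module M with a surjective
   R-linear map p : R -> M whose kernel is exactly I. *)
Definition pure_ideal (I : {pred R}) : Prop :=
  exists (M : lmodType R) (p : R^o -> M),
    [/\ linear p, (forall m, exists x, p x = m),
        (forall x, p x = 0 <-> x \in I) & flat_module M].

Definition reduced_ring : Prop :=
  forall (x : R) (n : nat), x ^+ n = 0 -> x = 0.

Definition zero_dimensional : Prop :=
  forall I : {pred R}, is_prime_ideal I -> is_maximal_ideal I.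

End CommAlg.

(* Main.v *)
Require Import Defs.
From HB Require Import structures.
From mathcomp Require Import all_boot all_order all_algebra.
From mathcomp Require Import boolp classical_sets.
Import GRing.Theory.
Set Implicit Arguments. Unset Strict Implicit.
Local Open Scope ring_scope.

Section MX.
Variables (R : comPzRingType) (x : R).
Definition mulx_pred : {pred R^o} := fun y => `[< exists s, y = s * x >].

Lemma mulx_closed : subsemimod_closed mulx_pred.
Proof.
split; [split|].
- by apply/asboolP; exists 0; rewrite mul0r.
- move=> a b /asboolP[s ->] /asboolP[t ->]; apply/asboolP; exists (s + t).
  by rewrite mulrDl.
- move=> r a /asboolP[s ->]; apply/asboolP; exists (r * s).
  by rewrite /GRing.scale /= mulrA.
Qed.

HB.instance Definition _ := GRing.isSubmodClosed.Build R R^o mulx_pred mulx_closed.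

Definition MX := {y : R^o | mulx_pred y}.
HB.instance Definition _ := [isSub for (@sval R^o mulx_pred) : MX -> R^o].
HB.instance Definition _ := [Choice of MX by <:].
HB.instance Definition _ := [SubChoice_isSubLmodule of MX by <:].
End MX.
Arguments mulx_pred {R}.
Arguments MX {R}.

Lemma lin0 (K : comPzRingType) (U V : lmodType K) (f : U -> V) : linear f -> f 0 = 0.
Proof. by move=> lf; have := lf 1 0 0; rewrite !scale1r !addr0 => /eqP; rewrite -subr_eq subrr eq_sym => /eqP. Qed.

Lemma linZ (K : comPzRingType) (U V : lmodType K) (f : U -> V) : linear f ->
  forall a u, f (a *: u) = a *: f u.
Proof. by move=> lf a u; have := lf a u 0; rewrite !addr0 (lin0 lf) addr0. Qed.

Lemma key (R : comPzRingType) (M : {pred R}) (x : R) : is_ideal M -> 1 \notin M ->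
  pure_ideal M -> x \in M -> (forall a, a * x = 0 -> a \in M) -> False.
Proof.
move=> [M0 MD MM] M1 [Q [p [lp sp kp fl]]] xM annM.
have scaleM m (q : Q) : m \in M -> m *: q = 0.
  move=> mM; have [t <-] := sp q.
  rewrite -(linZ lp); apply/kp; rewrite [_ *: _]mulrC; exact: MM.
have eqscale s s' (q : Q) : s * x = s' * x -> s *: q = s' *: q.
  move=> e; apply/eqP; rewrite -subr_eq0 -scalerBl; apply/eqP/scaleM/annM.
  by rewrite mulrBl e subrr.
pose A := MX x.
have exA (a : A) : exists s, val a = s * x by apply/asboolP; exact: (valP a).
pose sA (a : A) := sval (cid (exA a)).
have sAE (a : A) : val a = sA a * x := svalP (cid (exA a)).
pose bA (a : A) (q : Q) := sA a *: q.
pose bB (r : R^o) (q : Q) := r *: q.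
have lval : linear (val : A -> R^o) by move=> k u v.
have linr (r : R) : linear (fun q : Q => r *: q).
  by move=> k u v; rewrite scalerDr !scalerA mulrC.
have tB : is_tensor bB.
  split; first (split; last exact: linr); first move=> m k u v.
    by rewrite /bB scalerDl scalerA.
  move=> N c [hc1 hc2]; exists (c 1); split; first exact: hc2.
    by move=> a m; rewrite /bB (linZ (hc2 1)) -(linZ (hc1 m)) [_ *: _]mulr1.
  by move=> g' lg' hg' t; rewrite -hg' /bB scale1r.
have x0P : mulx_pred x x by apply/asboolP; exists 1; rewrite mul1r.
pose x0 : A := Sub x x0P.
have bAx0 t : bA x0 t = t.
  by rewrite /bA (eqscale _ 1) ?scale1r // -sAE mul1r.
have tA : is_tensor bA.
  split; first (split; last by move=> r; exact: (linr (sA r))); first move=> m k u v.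
    rewrite /bA (eqscale _ (k * sA u + sA v)) ?scalerDl ?scalerA //.
    by rewrite -sAE lval mulrDl -mulrA -!sAE.
  move=> N c [hc1 hc2]; exists (c x0); split; first exact: hc2.
    move=> a m; rewrite /bA (linZ (hc2 x0)) -(linZ (hc1 m)); congr c.
    by apply: val_inj; rewrite /= sAE.
  by move=> g' lg' hg' t; rewrite -hg' bAx0.
have g0 : linear (fun _ : Q => (0 : Q)) by move=> k u v; rewrite scaler0 addr0.
have := fl A R^o val lval val_inj Q Q bA bB tA tB _ g0.
have compat : forall a m, (fun _ : Q => (0 : Q)) (bA a m) = bB (val a) m.
  by move=> a m; rewrite /bB sAE scaleM //; exact: MM.
move=> /(_ compat) inj.
have : p 1 = 0 by apply: inj.
by move/kp; apply/negP.
Qed.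

Section Max.
Variable R : comPzRingType.

Definition idl (J : {pred R}) (X : set R) :=
  [/\ X 0, (forall a b, X a -> X b -> X (a + b)), (forall a b, X b -> X (a * b)),
      ~ X 1 & forall y, y \in J -> X y].

Lemma exists_max (J : {pred R}) : is_ideal J -> 1 \notin J ->
  exists M : {pred R}, is_maximal_ideal M /\ {subset J <= M}.
Proof.
move=> [J0 JD JM] J1.
pose P (X : set R) := X = set0 \/ idl J X.
have Pne X y : P X -> X y -> idl J X.
  by case=> // XE; rewrite XE.
have [] := @Zorn_bigcup R P.
  move=> F FP Ftot.
  have [[X0 FX0 nX0]|allE] := pselect (exists2 X, F X & X <> set0); last first.
    left; apply/seteqP; split=> y // [X FX Xy]; apply: allE; exists X => // XE.
    by rewrite XE in Xy.
  have iX0 : idl J X0 by case: (FP _ FX0).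
  have mem2 X Y a b : F X -> F Y -> X a -> Y b ->
      exists Z, [/\ F Z, idl J Z, Z a & Z b].
    move=> FX FY Xa Yb; have [XY|YX] := Ftot _ _ FX FY.
      by exists Y; split=> //; [exact: Pne (FP _ FY) Yb | exact: XY].
    by exists X; split=> //; [exact: Pne (FP _ FX) Xa | exact: YX].
  right; case: iX0 => [X00 _ _ _ X0J]; split.
  - by exists X0.
  - move=> a b [X FX Xa] [Y FY Yb]; have [Z [FZ [_ ZD _ _ _] Za Zb]] := mem2 _ _ _ _ FX FY Xa Yb.
    by exists Z => //; apply: ZD.
  - move=> a b [X FX Xb]; exists X => //; have [_ _ XM _ _] := Pne _ _ (FP _ FX) Xb.
    exact: XM.
  - move=> [X FX X1]; have [_ _ _ nX1 _] := Pne _ _ (FP _ FX) X1; exact: nX1.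
  - by move=> y yJ; exists X0 => //; apply: X0J.
move=> A [PA Amax].
have iJ : idl J (fun y => y \in J).
  by split=> //; exact/negP.
have [A0|iA] := PA.
  exfalso; apply: (Amax (fun y => y \in J)); last by right.
  rewrite A0; split=> // /(_ 0 J0) //.
case: iA => [A0 AD AM A1 AJ].
exists (fun y => `[< A y >]); split; last by move=> y yJ; apply/asboolP; exact: AJ.
split.
- split; first exact/asboolP.
  + by move=> a b /asboolP ? /asboolP ?; apply/asboolP; exact: AD.
  + by move=> a b /asboolP ?; apply/asboolP; exact: AM.
- by apply/negP => /asboolP.
move=> J' [J'0 J'D J'M] sAJ' nJ' y yJ'; apply/asboolP; apply: contrapT => nAy.
apply: (Amax (fun z => z \in J')).
  split; first by move=> z Az; apply: sAJ'; exact/asboolP.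
  by move=> /(_ y yJ').
right; split=> //; last (by move=> z zJ; apply: sAJ'; apply/asboolP; exact: AJ); try exact/negP.
Qed.
End Max.

Unset Implicit Arguments.
Theorem proposition2p7 (R : comPzRingType) :
  (forall I : {pred R}, is_maximal_ideal I -> pure_ideal I) ->
  reduced_ring R /\ zero_dimensional R.
Proof.
move=> H; split.
- move=> x n xn0; case: (eqVneq x 0) => // xnz; exfalso.
  have ex : exists m, x ^+ m.+2 == 0.
    case: n xn0 => [|[|n]] xn0.
    + by move: xnz; rewrite -[x]mulr1 -(expr0 x) xn0 mulr0 eqxx.
    + by move: xnz; rewrite -(expr1 x) xn0 eqxx.
    + by exists n; rewrite xn0.
  case: (ex_minnP ex) => m /eqP xm hmin.
  pose y := x ^+ m.+1.
  have ynz : y != 0.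
    case: m xm hmin @y => [|m] xm hmin; first by rewrite /= expr1.
    apply/eqP => ym; have := hmin m; rewrite ym eqxx => /(_ isT).
    by rewrite ltnn.
  pose J : {pred R} := fun a => a * y == 0.
  have iJ : is_ideal J.
    split; first by rewrite unfold_in /= mul0r.
    + by move=> a b; rewrite !unfold_in /= mulrDl => /eqP -> /eqP ->; rewrite addr0.
    + by move=> a b; rewrite !unfold_in /= -mulrA => /eqP ->; rewrite mulr0.
  have nJ : 1 \notin J by rewrite unfold_in /= mul1r.
  have [M [mM sJM]] := exists_max iJ nJ.
  have xM : x \in M by apply: sJM; rewrite unfold_in /= /y -exprS xm.
  have yM : y \in M.
    by case: mM => [[_ _ MM] _ _]; rewrite /y exprSr; exact: MM.
  case: (mM) => iM nM _.
  apply: (key iM nM (H M mM) yM) => a ay; apply: sJM.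
  by rewrite unfold_in /= ay.
- move=> P [iP nP pP]; split=> // J iJ sPJ nJ a aJ.
  case: (boolP (a \in P)) => // naP; exfalso.
  have [M [mM sJM]] := exists_max iJ nJ.
  case: (mM) => iM nM _.
  apply: (key iM nM (H M mM) (sJM _ aJ)) => b ba.
  apply: sJM; apply: sPJ.
  case: iP => [P0 _ _]; have := pP b a; rewrite ba => /(_ P0) [] //.
  by move=> aP; rewrite aP in naP.
Qed.
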